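(* For every $n\ge1$, the co-cloaktic monoid $\mathcal A_n^*/{\equiv^{\mathrm{co}}_{\mathrm{clk}}}$ satisfies every semigroup identity satisfied by the monoid $\mathrm{TMat}_n(\mathbb T)$ of $n\times n$ upper triangular tropical matrices.
   Context: $\mathcal A_n=\{a_1<\cdots<a_n\}$. For $w\in\mathcal A_n^*$, $L_{[i,j]}(w)$ is the maximal length of a nondecreasing (not necessarily contiguous) subword of $w$ with all letters in $\{a_i,\dots,a_j\}$; $u\equiv_{\mathrm{clk}}v$ iff $L_{[i,j]}(u)=L_{[i,j]}(v)$ for all $1\le i\le j\le n$. $\mathrm{cmr}(a_\ell)=a_na_{n-1}\cdots a_1$ with $a_{n-\ell+1}$ omitted, extended multiplicatively to words; $u\equiv^{\mathrm{co}}_{\mathrm{clk}}v$ iff $\mathrm{cmr}(u)\equiv_{\mathrm{clk}}\mathrm{cmr}(v)$. $\mathrm{TMat}_n(\mathbb T)$: upper triangular matrices over $\mathbb T=\mathbb R\cup\{-\infty\}$ with max-plus product. A semigroup identity is a formal equality $u=v$ of two distinct nonempty words over variables; $S$ satisfies it if $\varphi(u)=\varphi(v)$ for every homomorphism $\varphi$ from the free semigroup on the variables to $S$. *)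

(* Defs.v *)
From Stdlib Require Import Reals.
From mathcomp Require Import all_boot.

Set Implicit Arguments.
Unset Strict Implicit.
Unset Printing Implicit Defensive.

(* Alphabet A_n = {a_1 < ... < a_n} is encoded as 'I_n : letter a_k is the
   ordinal k-1.  Words are sequences of letters. *)
Definition word (n : nat) := seq 'I_n.

(* L_[i,j](w) (0-based i j): maximal length of a nondecreasing (not
   necessarily contiguous) subword of w all of whose letters lie in
   {a_i,...,a_j}.  Subwords are the masks of w. *)
Definition Lij (n : nat) (i j : nat) (w : word n) : nat :=
  \max_(m : (size w).-tuple bool |
          sorted (fun a b : 'I_n => (a <= b)%N) (mask m w)
          && all (fun a : 'I_n => (i <= a <= j)%N) (mask m w))
     size (mask m w).

Definition clk_equiv (n : nat) (u v : word n) : Prop :=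
  forall i j : 'I_n, (i <= j)%N -> Lij i j u = Lij i j v.

(* cmr(a_l) = a_n a_{n-1} ... a_1 with a_{n-l+1} omitted.  With 0-based
   k = l-1 the omitted letter has 0-based index n-1-k, i.e. rev_ord k. *)
Definition cmr_letter (n : nat) (k : 'I_n) : word n :=
  [seq a <- rev (enum 'I_n) | a != rev_ord k].

Definition cmr (n : nat) (w : word n) : word n :=
  flatten (map (@cmr_letter n) w).

Definition coclk_equiv (n : nat) (u v : word n) : Prop :=
  clk_equiv (cmr u) (cmr v).

Definition vword := seq nat.

Definition subst (n : nat) (s : nat -> word n) (u : vword) : word n :=
  flatten (map s u).

(* The co-cloaktic monoid satisfies u = v: for every homomorphism from the
   free semigroup to A_n^*/coclk, i.e. every assignment of (classes of)
   words to variables, the images agree. *)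
Definition coclk_satisfies (n : nat) (u v : vword) : Prop :=
  forall s : nat -> word n, coclk_equiv (subst s u) (subst s v).

Definition trop := option R.

Definition tadd (a b : trop) : trop :=
  match a, b with
  | None, x => x
  | x, None => x
  | Some x, Some y => Some (Rmax x y)
  end.

Definition tmul (a b : trop) : trop :=
  match a, b with
  | Some x, Some y => Some (Rplus x y)
  | _, _ => None
  end.

Definition tmat (n : nat) := 'I_n -> 'I_n -> trop.

Definition upper_tri (n : nat) (A : tmat n) : Prop :=
  forall i j : 'I_n, (j < i)%N -> A i j = None.

Definition tmmul (n : nat) (A B : tmat n) : tmat n :=
  fun i j => foldr tadd None [seq tmul (A i k) (B k j) | k <- enum 'I_n].

Definition tmid (n : nat) : tmat n :=
  fun i j => if i == j then Some R0 else None.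

Definition teval (n : nat) (s : nat -> tmat n) (u : vword) : tmat n :=
  foldr (fun x M => tmmul (s x) M) (@tmid n) u.

Definition tmat_satisfies (n : nat) (u v : vword) : Prop :=
  forall s : nat -> tmat n, (forall x, upper_tri (s x)) ->
    forall i j : 'I_n, teval s u i j = teval s v i j.

Definition semigroup_identity (u v : vword) : Prop :=
  u <> [::] /\ v <> [::] /\ u <> v.

(* Main.v *)
Require Import Defs.
From Stdlib Require Import Reals.
From mathcomp Require Import all_boot.
Set Implicit Arguments.
Unset Strict Implicit.

Fixpoint D (n : nat) (w : word n) (i j : nat) : nat :=
  match w with
  | [::] => 0
  | a :: w' => maxn (D w' i j) (if (i <= a <= j)%N then (D w' a j).+1 else 0)
  end.

Definition Rle_ord (n : nat) := fun a b : 'I_n => (a <= b)%N.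
Lemma Rle_tr n : transitive (@Rle_ord n).
Proof. move=> a b c; exact: leq_trans. Qed.

Lemma D_anti n (w : word n) i i' j : (i <= i')%N -> (D w i' j <= D w i j)%N.
Proof.
move=> hi; elim: w => //= a w IH.
rewrite geq_max (leq_trans IH (leq_maxl _ _)) /=.
case: ifP => // /andP[h1 h2].
by rewrite (leq_trans hi h1) h2 leq_maxr.
Qed.

Lemma lemA n (w : word n) (m : seq bool) i j :
  sorted (@Rle_ord n) (mask m w) ->
  all (fun a : 'I_n => (i <= a <= j)%N) (mask m w) ->
  (size (mask m w) <= D w i j)%N.
Proof.
elim: w m i => [|a w IH] [|[] m] i //= hs ha.
- move: hs; rewrite (path_sortedE (@Rle_tr n)) => /andP[hall hs].
  move: ha => /andP[hij ha].
  rewrite hij; apply: leq_trans (leq_maxr _ _); rewrite ltnS.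
  apply: IH => //.
  apply/allP => x hx; move/allP: hall => /(_ x hx) hax.
  move/allP: ha => /(_ x hx) /andP[_ ->]; by rewrite andbT; exact: hax.
- by apply: leq_trans (leq_maxl _ _); apply: IH.
Qed.

Lemma lemB n (w : word n) i j : exists m : seq bool,
  [/\ size m = size w, sorted (@Rle_ord n) (mask m w),
      all (fun a : 'I_n => (i <= a <= j)%N) (mask m w) &
      size (mask m w) = D w i j].
Proof.
elim: w i => [|a w IH] i /=; first by exists [::].
case hc: (i <= a <= j)%N; last first.
  have [m [h1 h2 h3 h4]] := IH i.
  by exists (false :: m); rewrite /= h1 h4 maxn0.
case: (leqP (D w i j) (D w a j).+1) => hle.
  have [m [h1 h2 h3 h4]] := IH a.
  exists (true :: m); rewrite /= h1 h4 hc; split => //.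
    by rewrite (path_sortedE (@Rle_tr n)) h2 andbT; apply/allP => x /(allP h3) /andP[].
  apply/allP => x /(allP h3) /andP[h5 ->].
  by rewrite andbT (leq_trans _ h5) //; move: hc => /andP[].
have [m [h1 h2 h3 h4]] := IH i.
by exists (false :: m); rewrite /= h1 h4.
Qed.

Lemma Lij_D n (w : word n) i j : Lij i j w = D w i j.
Proof.
apply/eqP; rewrite eqn_leq; apply/andP; split.
  apply/bigmax_leqP => m /andP[h1 h2]; exact: lemA.
have [m [h1 h2 h3 h4]] := lemB w i j.
have hm : size m == size w by apply/eqP.
rewrite -h4; apply: (leq_bigmax_cond (Tuple hm)) => /=.
by rewrite h2 h3.
Qed.

Lemma D_cat_ge n (w1 w2 : word n) i k j : (i <= k)%N -> (k <= j)%N ->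
  (D w1 i k + D w2 k j <= D (w1 ++ w2) i j)%N.
Proof.
elim: w1 i => [|a w1 IH] i hik hkj /=; first exact: D_anti.
rewrite addn_maxl geq_max; apply/andP; split.
  by apply: leq_trans (leq_maxl _ _); apply: IH.
case hc: (i <= a <= k)%N; last by rewrite add0n; apply: leq_trans (leq_maxl _ _); exact: leq_trans (leq_addl _ _) (IH i hik hkj).
move: hc => /andP[h1 h2].
rewrite h1 (leq_trans h2 hkj) /= addSn; apply: leq_trans (leq_maxr _ _).
by rewrite ltnS IH.
Qed.

Lemma D_cat_le n (w1 w2 : word n) i j : (i <= j)%N ->
  exists2 k, (i <= k <= j)%N & (D (w1 ++ w2) i j <= D w1 i k + D w2 k j)%N.
Proof.
elim: w1 i => [|a w1 IH] i hij /=; first by exists i; rewrite ?leqnn ?hij.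
have base : forall k, (D (w1 ++ w2) i j <= D w1 i k + D w2 k j)%N ->
    (D (w1 ++ w2) i j <= D (a :: w1) i k + D w2 k j)%N.
  by move=> k hle; apply: leq_trans hle _; rewrite leq_add2r leq_maxl.
case hc: (i <= a <= j)%N; last first.
  by have [k hk hle] := IH i hij; exists k => //; rewrite maxn0 base.
case: (leqP (D (w1 ++ w2) i j) (D (w1 ++ w2) a j).+1) => h.
- move: hc => /andP[h1 h2].
  have [k /andP[hk1 hk2] hle] := IH a h2; exists k.
    by rewrite (leq_trans h1 hk1) hk2.
  have hb : ((D w1 a k).+1 + D w2 k j <= D (a :: w1) i k + D w2 k j)%N.
    by rewrite leq_add2r /= h1 hk1 leq_maxr.
  by apply: leq_trans hb; rewrite addSn ltnS.
- by have [k hk hle] := IH i hij; exists k => //; rewrite base.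
Qed.

Definition Mword (n : nat) (w : word n) : tmat n :=
  fun i j => if (i <= j)%N then Some (INR (D w i j)) else None.

Lemma Rmax_INR a b : Rmax (INR a) (INR b) = INR (maxn a b).
Proof.
case: (leqP a b) => h.
  by rewrite Rmax_right //; apply: le_INR; apply/leP.
by rewrite Rmax_left //; apply: le_INR; apply/leP; apply: ltnW.
Qed.

Lemma max0_seq n (s : seq 'I_n) (P : pred 'I_n) (f : 'I_n -> nat) :
  ~~ has P s -> \max_(k <- s | P k) f k = 0.
Proof.
elim: s => [|x s IH]; first by rewrite big_nil.
by rewrite /= negb_or big_cons => /andP[/negbTE -> /IH].
Qed.

Lemma foldr_opt n (s : seq 'I_n) (P : pred 'I_n) (f : 'I_n -> nat) :
  foldr tadd None [seq (if P k then Some (INR (f k)) else None) | k <- s] =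
  if has P s then Some (INR (\max_(k <- s | P k) f k)) else None.
Proof.
elim: s => [|x s IH] //=; rewrite big_cons IH.
case: (P x) => //=; case hs: (has P s) => //=.
  by rewrite Rmax_INR.
by rewrite max0_seq ?hs // maxn0.
Qed.

Lemma tmmul_ext n (A B B' : tmat n) i j : (forall k, B k j = B' k j) ->
  tmmul A B i j = tmmul A B' i j.
Proof. by move=> h; rewrite /tmmul; congr foldr; apply: eq_map => k; rewrite h. Qed.

Lemma mul_Mword n (w1 w2 : word n) i j :
  tmmul (Mword w1) (Mword w2) i j = Mword (w1 ++ w2) i j.
Proof.
rewrite /tmmul (eq_map (g := fun k : 'I_n => if (i <= k <= j)%N then
   Some (INR (D w1 i k + D w2 k j)) else None)); last first.
  move=> k; rewrite /Mword; case: (i <= k)%N; case: (k <= j)%N => //=.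
  by rewrite plus_INR.
rewrite foldr_opt /Mword.
case hij: (i <= j)%N.
  have -> : has (fun k : 'I_n => (i <= k <= j)%N) (enum 'I_n).
    by apply/hasP; exists j; rewrite ?mem_enum // hij leqnn.
  congr (Some (INR _)); apply/eqP; rewrite eqn_leq; apply/andP; split.
    apply/bigmax_leqP_seq => k _ /andP[h1 h2]; exact: D_cat_ge.
  have [k /andP[h1 h2] hle] := D_cat_le w1 w2 hij.
  have hk : (k < n)%N by apply: leq_ltn_trans h2 (ltn_ord j).
  apply: leq_trans hle _.
  apply: (leq_bigmax_seq (Ordinal hk)); first by rewrite mem_enum.
  by rewrite /= h1 h2.
case: hasP => // [[k _ /andP[h1 h2]]].
by move: hij; rewrite (leq_trans h1 h2).
Qed.

Lemma mul_tmid n (w : word n) i j :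
  tmmul (Mword w) (@tmid n) i j = Mword w i j.
Proof.
rewrite /tmmul (eq_map (g := fun k : 'I_n => if (i <= k)%N && (k == j) then
   Some (INR (D w i k)) else None)); last first.
  move=> k; rewrite /Mword /tmid; case: (i <= k)%N; case: (k == j) => //=.
  by rewrite Rplus_0_r.
rewrite foldr_opt /Mword.
case hij: (i <= j)%N.
  have -> : has (fun k : 'I_n => (i <= k)%N && (k == j)) (enum 'I_n).
    by apply/hasP; exists j; rewrite ?mem_enum // hij eqxx.
  congr (Some (INR _)); apply/eqP; rewrite eqn_leq; apply/andP; split.
    by apply/bigmax_leqP_seq => k _ /andP[h1 /eqP ->].
  apply: (leq_bigmax_seq j); first by rewrite mem_enum.
  by rewrite /= hij eqxx.
case: hasP => // [[k _ /andP[h1 /eqP h2]]].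
by move: hij; rewrite -h2 h1.
Qed.

Lemma teval_Mword n (t : nat -> word n) (u : vword) i j : u <> [::] ->
  teval (fun x => Mword (t x)) u i j = Mword (subst t u) i j.
Proof.
elim: u i j => [|x u IH] i j // _.
case: u IH => [|y u] IH.
  by rewrite /teval /= mul_tmid /subst /= cats0.
rewrite /= (tmmul_ext _ (B' := Mword (subst t (y :: u)))); last first.
  by move=> k; apply: IH.
by rewrite mul_Mword.
Qed.

Lemma cmr_cat n (w1 w2 : word n) : cmr (w1 ++ w2) = cmr w1 ++ cmr w2.
Proof. by rewrite /cmr map_cat flatten_cat. Qed.

Lemma cmr_subst n (s : nat -> word n) u :
  cmr (subst s u) = subst (fun x => cmr (s x)) u.
Proof. by elim: u => [|x u IH] //=; rewrite /subst /= cmr_cat; congr (_ ++ _); exact: IH. Qed.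

Theorem mainTheorem10 (n : nat) (hn : (1 <= n)%N) (u v : vword) :
  semigroup_identity u v ->
  tmat_satisfies n u v ->
  coclk_satisfies n u v.
Proof.
move=> [hu [hv _]] H s i j hij.
rewrite !cmr_subst !Lij_D.
have hup : forall x, upper_tri (Mword (cmr (s x))).
  by move=> x a b hba; rewrite /Mword leqNgt hba.
have := H _ hup i j; rewrite !teval_Mword // /Mword hij.
by case=> /INR_eq.
Qed.
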